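(* Let $N\ge1$, let $\phi:H_0(S_N)\to M_N$ be the quotient morphism sending $\pi_i\mapsto\pi_i$, where $M_N$ is the quotient of $H_0(S_N)$ by the relations $\pi_i\pi_{i+1}\pi_i=\pi_i\pi_{i+1}$ ($1\le i\le N-2$), and let $\Psi$ be the automorphism of $H_0(S_N)$ with $\Psi(\pi_i)=\pi_{N-i}$. For every $m\in M_N$ let $G_m=\{w\in S_N: \phi(\Psi(\pi_w))=m\}$. Every nonempty $G_m$ contains a unique $[321]$-avoiding permutation, which is of minimal length in $G_m$, and a unique $[312]$-avoiding permutation, which is of maximal length in $G_m$.
   Context: $S_N$ is generated by simple transpositions $s_1,\dots,s_{N-1}$; permutations are in one-line notation and composed as functions, $(uv)(j)=u(v(j))$, so $xs_i$ swaps the entries in positions $i,i+1$. $\operatorname{len}$ is Coxeter length (number of inversions). $H_0(S_N)$ is generated by $\pi_1,\dots,\pi_{N-1}$ with relations $\pi_i^2=\pi_i$, $\pi_i\pi_j=\pi_j\pi_i$ for $|i-j|\ge2$, $\pi_i\pi_{i+1}\pi_i=\pi_{i+1}\pi_i\pi_{i+1}$; $\pi_w:=\pi_{i_1}\cdots\pi_{i_k}$ for any reduced word $w=s_{i_1}\cdots s_{i_k}$, giving a bijection $S_N\to H_0(S_N)$. A permutation contains a pattern $\sigma\in S_k$ if some subsequence of its one-line notation is in the same relative order as $\sigma$; otherwise it avoids $\sigma$. *)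

(* Defs.v *)
From mathcomp Require Import all_boot all_fingroup.
Set Implicit Arguments. Unset Strict Implicit. Unset Printing Implicit Defensive.
Import GroupScope.

(* Throughout, N = n.+1 (so N >= 1); S_N is 'S_(n.+1), positions/values are
   0-indexed ordinals 'I_(n.+1) (position j here = position j+1 in the paper).
   Words are sequences of letters i with 1 <= i <= N-1, letter i standing for
   s_i (resp. pi_i). *)

Definition valid_letter (n i : nat) : bool := (0 < i) && (i <= n).

Definition sgen (n i : nat) : 'S_n.+1 := tperm (inord i.-1) (inord i).

(* function composition (u v)(j) = u (v j); mathcomp's (v * u) x = u (v x) *)
Definition comp (n : nat) (u v : 'S_n.+1) : 'S_n.+1 := v * u.

Definition wordperm (n : nat) (l : seq nat) : 'S_n.+1 :=
  foldr (fun i w => comp (sgen n i) w) 1 l.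

(* Coxeter length = number of inversions *)
Definition len (n : nat) (w : 'S_n.+1) : nat :=
  #|[set p : 'I_n.+1 * 'I_n.+1 | (p.1 < p.2) && (w p.2 < w p.1)]|.

Definition reduced_word (n : nat) (l : seq nat) (w : 'S_n.+1) : Prop :=
  [/\ all (valid_letter n) l, wordperm n l = w & size l = len w].

Definition contains_pattern (n : nat) (w : 'S_n.+1) (sigma : seq nat) : Prop :=
  exists idx : seq 'I_n.+1,
    [/\ size idx = size sigma, sorted ltn (map val idx) &
        forall a b, a < size sigma -> b < size sigma ->
          (w (nth ord0 idx a) < w (nth ord0 idx b)) = (nth 0 sigma a < nth 0 sigma b)].

Definition avoids (n : nat) (w : 'S_n.+1) (sigma : seq nat) : Prop :=
  ~ contains_pattern w sigma.

(* The monoid congruence on words presenting M_N: the 0-Hecke relations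
   together with pi_i pi_{i+1} pi_i = pi_i pi_{i+1}. *)
Inductive Mcong (n : nat) : seq nat -> seq nat -> Prop :=
| Mc_refl u : Mcong n u u
| Mc_sym u v : Mcong n u v -> Mcong n v u
| Mc_trans u v w : Mcong n u v -> Mcong n v w -> Mcong n u w
| Mc_ctx a b u v : Mcong n u v -> Mcong n (a ++ u ++ b) (a ++ v ++ b)
| Mc_idem i : valid_letter n i -> Mcong n [:: i; i] [:: i]
| Mc_comm i j : valid_letter n i -> valid_letter n j -> (i.+2 <= j) || (j.+2 <= i) ->
    Mcong n [:: i; j] [:: j; i]
| Mc_braid i : valid_letter n i -> valid_letter n i.+1 ->
    Mcong n [:: i; i.+1; i] [:: i.+1; i; i.+1]
| Mc_M i : valid_letter n i -> valid_letter n i.+1 ->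
    Mcong n [:: i; i.+1; i] [:: i; i.+1].

Definition Psi_word (n : nat) (l : seq nat) : seq nat := map (fun i => n.+1 - i) l.

(* w \in G_m, where m \in M_N is represented by the word m:
   phi(Psi(pi_w)) = m, pi_w computed from a reduced word of w *)
Definition inG (n : nat) (m : seq nat) (w : 'S_n.+1) : Prop :=
  exists l, reduced_word l w /\ Mcong n (Psi_word n l) m.

(* Main.v *)
Require Import Defs.
From mathcomp Require Import all_boot all_fingroup zify.
Set Implicit Arguments. Unset Strict Implicit. Unset Printing Implicit Defensive.

Definition hact (i y : nat) : nat := if y == i then i.-1 else y.

Fixpoint Inv (W : seq nat) (y : nat) : nat :=
  match W with [::] => y | i :: W' => hact i (Inv W' y) end.

Lemma Inv_cat (a b : seq nat) y : Inv (a ++ b) y = Inv a (Inv b y).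
Proof. by elim: a => //= i a ->. Qed.

Lemma Mcong_sound n u v : Mcong n u v -> forall y, Inv u y = Inv v y.
Proof.
induction 1; move=> y /=.
- by [].
- by rewrite IHMcong.
- by rewrite IHMcong1 IHMcong2.
- by rewrite !Inv_cat IHMcong.
- by rewrite /hact; do ! case: eqP => //; lia.
- rewrite /hact; move: H1; do ! case: eqP => //; lia.
- move: H; rewrite /hact /valid_letter; do ! case: eqP => //; lia.
- move: H; rewrite /hact /valid_letter; do ! case: eqP => //; lia.
Qed.

Lemma Mc_app n u u' v v' : Mcong n u u' -> Mcong n v v' -> Mcong n (u ++ v) (u' ++ v').
Proof.
move=> H1 H2; apply: (Mc_trans (v := u' ++ v)).
  by have := Mc_ctx [::] v H1.
by have := Mc_ctx u' [::] H2; rewrite !cats0.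
Qed.

Lemma Mc_cons n i u v : Mcong n u v -> Mcong n (i :: u) (i :: v).
Proof. by move=> H; have := Mc_app (Mc_refl n [:: i]) H. Qed.

Lemma Mc_commute n i u : valid_letter n i -> all (valid_letter n) u ->
  all (fun j => (i.+2 <= j) || (j.+2 <= i)) u -> Mcong n (i :: u) (u ++ [:: i]).
Proof.
move=> Hi; elim: u => [|j u IH] /=; first by move=> *; apply: Mc_refl.
case/andP=> Hj Hu /andP[Hij Hc].
apply: (Mc_trans (v := j :: i :: u)).
  by have := Mc_app (Mc_comm Hi Hj Hij) (Mc_refl n u).
exact: Mc_cons (IH Hu Hc).
Qed.

Lemma all_iota_valid n a k : 0 < a -> a + k <= n.+1 -> all (valid_letter n) (iota a k).
Proof.
move=> Ha Hk; apply/allP => j; rewrite mem_iota /valid_letter => /andP[H1 H2].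
apply/andP; split; lia.
Qed.

Lemma Mc_absl n k a i : 0 < a -> a + k <= n.+1 -> a <= i < a + k ->
  Mcong n (i :: iota a k) (iota a k).
Proof.
elim: k a => [|k IH] a Ha Hk Hi; first by lia.
rewrite /=.
have Hva : valid_letter n a by rewrite /valid_letter; apply/andP; split; lia.
case: (ltngtP i a) => Hia; first by lia.
- case: (ltngtP i a.+1) => Hia1.
  + lia.
  + apply: (Mc_trans (v := a :: i :: iota a.+1 k)).
      have Hvi : valid_letter n i by rewrite /valid_letter; apply/andP; split; lia.
      have Hc : (i.+2 <= a) || (a.+2 <= i) by apply/orP; right; lia.
      by have := Mc_app (Mc_comm Hvi Hva Hc) (Mc_refl n (iota a.+1 k)).
    apply: Mc_cons; apply: IH; lia.
  + subst i; case: k IH Hk Hi => [|k] IH Hk Hi; first by lia.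
    rewrite /=.
    have Hva1 : valid_letter n a.+1 by rewrite /valid_letter; apply/andP; split; lia.
    apply: (Mc_trans (v := [:: a; a.+1; a] ++ iota a.+2 k)).
      by have := Mc_app (Mc_sym (Mc_braid Hva Hva1)) (Mc_refl n (iota a.+2 k)).
    by have := Mc_app (Mc_M Hva Hva1) (Mc_refl n (iota a.+2 k)).
- subst i. by have := Mc_app (Mc_idem Hva) (Mc_refl n (iota a.+1 k)).
Qed.

Lemma Mc_absr n k a c : 0 < a -> a + k <= n.+1 -> a <= c < a + k ->
  Mcong n (iota a k ++ [:: c]) (iota a k).
Proof.
elim: k a => [|k IH] a Ha Hk Hc; first by lia.
rewrite /=.
have Hva : valid_letter n a by rewrite /valid_letter; apply/andP; split; lia.
case: (ltngtP c a) => Hca; first by lia.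
- apply: Mc_cons; apply: IH; lia.
- subst c; case: k IH Hk Hc => [|k] IH Hk Hc; first by rewrite /=; apply: Mc_idem.
  rewrite /=.
  have Hva1 : valid_letter n a.+1 by rewrite /valid_letter; apply/andP; split; lia.
  apply: (Mc_trans (v := [:: a; a.+1; a] ++ iota a.+2 k)).
    apply: Mc_cons; apply: Mc_cons; apply: Mc_sym.
    apply: Mc_commute => //; first by apply: all_iota_valid; lia.
    apply/allP => j; rewrite mem_iota => /andP[H1 _]; apply/orP; left; lia.
  by have := Mc_app (Mc_M Hva Hva1) (Mc_refl n (iota a.+2 k)).
Qed.

Fixpoint NFk (g : nat -> nat) (x : nat) : seq nat :=
  match x with 0 => [::] | x'.+1 => iota (g x'.+1).+1 (x'.+1 - g x'.+1) ++ NFk g x' end.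

Lemma NFk_ext g g' x : (forall y, y <= x -> g y = g' y) -> NFk g x = NFk g' x.
Proof.
elim: x => [|x IH] H //=; rewrite H // IH // => y Hy; apply: H; lia.
Qed.

Lemma NFk_id x : NFk id x = [::].
Proof. by elim: x => //= x ->; rewrite subnn. Qed.

Lemma NFk_step n g : (forall y, g y <= y) -> (forall y1 y2, y1 <= y2 -> g y1 <= g y2) ->
  forall i x, 0 < i -> i <= x -> x <= n ->
  Mcong n (i :: NFk g x) (NFk (fun y => hact i (g y)) x).
Proof.
move=> Hle Hmon i; elim => [|x IH] Hi Hix Hxn; first by lia.
have Hrest : i = x.+1 -> NFk (fun y => hact i (g y)) x = NFk g x.
  move=> E; apply: NFk_ext => y Hy; rewrite /hact; have := Hle y; case: eqP => //; lia.
rewrite /=.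
have [Hix1|Hix1] : i = x.+1 \/ i < x.+1 by lia.
-
  subst i; rewrite Hrest //.
  have Hg := Hle x.+1.
  have [Hgx|Hgx] : g x.+1 = x.+1 \/ g x.+1 < x.+1 by lia.
  + rewrite Hgx /hact eqxx subnn /= .
    have -> : x.+1 - x = 1 by lia.
    rewrite /=. apply: Mc_refl.
  + rewrite /hact; have -> : (g x.+1 == x.+1) = false by apply/eqP; lia.
    have := Mc_app (Mc_absl (n:=n) (k := x.+1 - g x.+1) (a := (g x.+1).+1) (i := x.+1) _ _ _) (Mc_refl n (NFk g x)).
    by apply; lia.
-
  have IH' := IH Hi (ltac:(lia)) (ltac:(lia)).
  have [Hgi|[Hgi|Hgi]] : g x.+1 < i \/ i < g x.+1 \/ g x.+1 = i by lia.
  +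
    have -> : hact i (g x.+1) = g x.+1 by rewrite /hact; case: eqP => //; lia.
    have -> : NFk (fun y => hact i (g y)) x = NFk g x.
      apply: NFk_ext => y Hy; rewrite /hact; have := Hmon _ _ (leqW Hy); case: eqP => //; lia.
    have := Mc_app (Mc_absl (n:=n) (k := x.+1 - g x.+1) (a := (g x.+1).+1) (i := i) _ _ _) (Mc_refl n (NFk g x)).
    by apply; lia.
  +
    have -> : hact i (g x.+1) = g x.+1 by rewrite /hact; case: eqP => //; lia.
    apply: (Mc_trans (v := iota (g x.+1).+1 (x.+1 - g x.+1) ++ (i :: NFk g x))); last first.
      exact: Mc_app (Mc_refl _ _) IH'.
    have Hvi : valid_letter n i by rewrite /valid_letter; apply/andP; split; lia.
    have HgX := Hle x.+1.
    have Hv1 : all (valid_letter n) (iota (g x.+1).+1 (x.+1 - g x.+1)) by apply: all_iota_valid; lia.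
    have Hv2 : all (fun j => (i.+2 <= j) || (j.+2 <= i)) (iota (g x.+1).+1 (x.+1 - g x.+1)).
      apply/allP => j; rewrite mem_iota => /andP[H1 _]; apply/orP; left; lia.
    have := Mc_app (Mc_commute Hvi Hv1 Hv2) (Mc_refl n (NFk g x)).
    by rewrite -catA /=.
  +
    rewrite Hgi /hact eqxx.
    have -> : x.+1 - i.-1 = (x.+1 - i).+1 by lia.
    have -> : i.-1.+1 = i by lia.
    rewrite /=.
    have HgX := Hle x.+1.
    apply: (Mc_trans (v := (i :: iota i.+1 (x.+1 - i) ++ [:: i]) ++ NFk g x)).
      have H := Mc_absr (n := n) (k := (x.+1 - i).+1) (a := i) (c := i) Hi (ltac:(lia)) (ltac:(lia)).
      have := Mc_app (Mc_sym H) (Mc_refl n (NFk g x)).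
      by [].
    rewrite /= -catA /=.
    have := Mc_app (Mc_refl n (i :: iota i.+1 (x.+1 - i))) IH'.
    by [].
Qed.


Lemma Inv_le W y : Inv W y <= y.
Proof. elim: W => //= i W IH; rewrite /hact; case: eqP => //; lia. Qed.

Lemma Inv_mon W y1 y2 : y1 <= y2 -> Inv W y1 <= Inv W y2.
Proof.
elim: W => //= i W IH H; have := IH H; rewrite /hact.
case: eqP => E1; case: eqP => E2 //; lia.
Qed.

Lemma Mc_complete n W : all (valid_letter n) W -> Mcong n W (NFk (Inv W) n).
Proof.
elim: W => [|i W IH] /=; first by move=> _; rewrite NFk_id; apply: Mc_refl.
case/andP => Hi HW.
apply: Mc_trans (Mc_cons i (IH HW)) _.
move: Hi; rewrite /valid_letter => /andP[H1 H2].
exact: (NFk_step (@Inv_le W) (@Inv_mon W) H1 H2 (leqnn n)).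
Qed.

Lemma Mc_of_Inv n W1 W2 : all (valid_letter n) W1 -> all (valid_letter n) W2 ->
  (forall y, y <= n -> Inv W1 y = Inv W2 y) -> Mcong n W1 W2.
Proof.
move=> H1 H2 E; apply: Mc_trans (Mc_complete H1) _.
rewrite (NFk_ext (g' := Inv W2)) //; exact: Mc_sym (Mc_complete H2).
Qed.

Local Open Scope group_scope.

Definition pm n (w : 'S_n.+1) (y : nat) : nat := \max_(z : 'I_n.+1 | z <= y) (w z : nat).

Lemma pm_ub n (w : 'S_n.+1) y (z : 'I_n.+1) : z <= y -> w z <= pm w y.
Proof. by move=> H; apply: (leq_bigmax_cond (P := fun z : 'I_n.+1 => z <= y) (F := fun z => (w z : nat)) z). Qed.

Lemma pm_wit n (w : 'S_n.+1) y : exists z : 'I_n.+1, z <= y /\ (w z : nat) = pm w y.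
Proof.
rewrite /pm (bigmax_eq_arg ord0) //.
case: arg_maxnP => //= z Hz _; by exists z.
Qed.

Lemma pm_char n (w : 'S_n.+1) y P : (exists z : 'I_n.+1, z <= y /\ (w z : nat) = P) ->
  (forall z : 'I_n.+1, z <= y -> w z <= P) -> pm w y = P.
Proof.
case=> z [Hz <-] H; apply/eqP; rewrite eqn_leq pm_ub // andbT.
by apply/bigmax_leqP => x Hx; apply: H.
Qed.

Lemma pm_le n (w : 'S_n.+1) y : pm w y <= n.
Proof. by have [z [_ <-]] := pm_wit w y; rewrite -ltnS. Qed.

Lemma pm_id n y : y <= n -> pm (1 : 'S_n.+1) y = y.
Proof.
move=> Hy; apply: pm_char.
  by exists (inord y); rewrite perm1 inordK.
by move=> z; rewrite perm1.
Qed.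

Lemma sgenE n i (x : 'I_n.+1) : valid_letter n i ->
  (sgen n i x : nat) = if (x : nat) == i.-1 then i else if (x : nat) == i then i.-1 else x.
Proof.
rewrite /valid_letter => /andP[H1 H2]; rewrite /sgen.
case: tpermP => [->|->|Ha Hb]; rewrite ?inordK //; try lia.
- by rewrite eqxx.
- by case: eqP => [|_]; [lia| rewrite eqxx].
- case: eqP => E1.
    by case: Ha; apply: val_inj; rewrite /= inordK //; lia.
  case: eqP => E2 //.
  by case: Hb; apply: val_inj; rewrite /= inordK.
Qed.

Definition invset n (w : 'S_n.+1) :=
  [set p : 'I_n.+1 * 'I_n.+1 | (p.1 < p.2) && (w p.2 < w p.1)].

Lemma lenE n (w : 'S_n.+1) : len w = #|invset w|.
Proof. by []. Qed.

Lemma sgen_order n i (a b : 'I_n.+1) : valid_letter n i -> a != b ->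
  ~~ (((a : nat) == i.-1) && ((b : nat) == i)) -> ~~ (((a:nat) == i) && ((b : nat) == i.-1)) ->
  (sgen n i a < sgen n i b) = (a < b).
Proof.
move=> Hi Hab H1 H2; rewrite !sgenE //.
have Hab' : (a : nat) != b by [].
move: Hi H1 H2 Hab'; rewrite /valid_letter; clear Hab.
move: (nat_of_ord a) (nat_of_ord b) => a' b'.
do ! case: eqP => /=; move=> *; apply/idP/idP; lia.
Qed.

Lemma sgen2 n i : sgen n i * sgen n i = 1.
Proof. by apply/permP => x; rewrite permM /sgen tpermK perm1. Qed.

Lemma perm_val_inj n (w : 'S_n.+1) (x y : 'I_n.+1) : (w x : nat) = w y -> x = y.
Proof. by move=> H; apply: (perm_inj (s := w)); apply: val_inj. Qed.

Lemma len_sgen_up n (w : 'S_n.+1) i (p q : 'I_n.+1) : valid_letter n i ->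
  (w p : nat) = i.-1 -> (w q : nat) = i -> p < q -> len (w * sgen n i) = (len w).+1.
Proof.
move=> Hi Hp Hq Hpq.
have Hi' := Hi; move: Hi'; rewrite /valid_letter => /andP[Hi1 Hi2].
rewrite !lenE.
have -> : invset (w * sgen n i) = (p, q) |: invset w.
  apply/setP => [[x1 x2]]; rewrite !inE /= !permM.
  case: (eqVneq (x1, x2) (p, q)) => [[-> ->]|Hne] /=.
    rewrite Hpq /= !sgenE // Hp Hq eqxx.
    by case: eqP => E; [lia|rewrite eqxx; lia].
  case: (ltnP x1 x2) => H //=.
  apply: sgen_order => //.
  - by apply/eqP => E; move: H; rewrite (perm_inj E) ltnn.
  - apply/negP => /andP[/eqP E1 /eqP E2].
    have ? : x2 = p by apply: (@perm_val_inj n w); lia.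
    have ? : x1 = q by apply: (@perm_val_inj n w); lia.
    subst; lia.
  - apply/negP => /andP[/eqP E1 /eqP E2].
    have ? : x2 = q by apply: (@perm_val_inj n w); lia.
    have ? : x1 = p by apply: (@perm_val_inj n w); lia.
    by subst; rewrite eqxx in Hne.
rewrite cardsU1 inE /= negb_and Hp Hq.
have -> : i < i.-1 = false by lia.
by rewrite orbT.
Qed.

Lemma len_sgen_down n (w : 'S_n.+1) i (p q : 'I_n.+1) : valid_letter n i ->
  (w p : nat) = i.-1 -> (w q : nat) = i -> q < p -> (len (w * sgen n i)).+1 = len w.
Proof.
move=> Hi Hp Hq Hqp.
have Hi' := Hi; move: Hi'; rewrite /valid_letter => /andP[Hi1 Hi2].
have := @len_sgen_up n (w * sgen n i) i q p Hi.
rewrite -mulgA sgen2 mulg1 !permM !sgenE // Hp Hq eqxx.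
have -> : (i == i.-1) = false by apply/eqP; lia.
rewrite eqxx => H; rewrite H //.
Qed.

Lemma ord_tri n (p q : 'I_n.+1) : [\/ p < q, q < p | p = q].
Proof.
case: (ltngtP p q) => H; [by constructor 1 | by constructor 2 | constructor 3; exact: val_inj].
Qed.

Lemma pos_ex n (w : 'S_n.+1) v : v <= n -> exists p : 'I_n.+1, (w p : nat) = v.
Proof. by move=> Hv; exists (w^-1 (inord v)); rewrite permKV inordK. Qed.

Lemma len_sgen_le n (w : 'S_n.+1) i : valid_letter n i -> len (w * sgen n i) <= (len w).+1.
Proof.
move=> Hi; have Hi' := Hi; move: Hi'; rewrite /valid_letter => /andP[Hi1 Hi2].
have [p Hp] := @pos_ex n w i.-1 (ltac:(lia)).
have [q Hq] := @pos_ex n w i Hi2.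
case: (ord_tri p q) => H.
- by rewrite (len_sgen_up Hi Hp Hq H).
- by have := len_sgen_down Hi Hp Hq H; lia.
- by move: Hp Hq; rewrite H; lia.
Qed.

Lemma wordperm_cons n i l : wordperm n (i :: l) = wordperm n l * sgen n i.
Proof. by []. Qed.

Lemma len_word_le n l : all (valid_letter n) l -> len (wordperm n l) <= size l.
Proof.
elim: l => [|i l IH].
  move=> _; rewrite lenE leqn0 cards_eq0; apply/eqP/setP => [[x y]]; rewrite !inE /= !perm1.
  by apply/negP => /andP[H1 H2]; lia.
case/andP => Hi Hl; rewrite wordperm_cons.
by apply: leq_trans (len_sgen_le _ Hi) _; rewrite ltnS IH.
Qed.

Lemma reduced_cons n i l (w : 'S_n.+1) : reduced_word (i :: l) w ->
  [/\ reduced_word l (wordperm n l), w = wordperm n l * sgen n i &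
      exists p q : 'I_n.+1, [/\ (wordperm n l p : nat) = i.-1, (wordperm n l q : nat) = i & p < q]].
Proof.
case=> Hv Hw Hs; move: Hv => /= /andP[Hi Hl].
have Hi' := Hi; move: Hi'; rewrite /valid_letter => /andP[Hi1 Hi2].
set w' := wordperm n l.
have [p Hp] := @pos_ex n w' i.-1 (ltac:(lia)).
have [q Hq] := @pos_ex n w' i Hi2.
have Hle := len_word_le Hl; rewrite -/w' in Hle.
have {}Hs : (size l).+1 = len (w' * sgen n i) by rewrite /w' -wordperm_cons Hw -Hs.
case: (ord_tri p q) => H.
- have E := len_sgen_up Hi Hp Hq H.
  split => //; last by exists p, q.
  by split => //; move: Hs; rewrite E; lia.
- have E := len_sgen_down Hi Hp Hq H; exfalso; move: Hs; rewrite -/w'; lia.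
- by move: Hp Hq; rewrite H; lia.
Qed.

Lemma pm_step n (w : 'S_n.+1) i (p q : 'I_n.+1) : valid_letter n i ->
  (w p : nat) = i.-1 -> (w q : nat) = i -> p < q ->
  forall y, pm (w * sgen n i) y = (if pm w y == i.-1 then i else pm w y).
Proof.
move=> Hi Hp Hq Hpq y.
have Hi' := Hi; move: Hi'; rewrite /valid_letter => /andP[Hi1 Hi2].
have [z0 [Hz0 Ez0]] := pm_wit w y.
have Hub := @pm_ub n w y.
case: eqP => HP.
- apply: pm_char.
    exists z0; split => //; rewrite permM sgenE // Ez0 HP eqxx //.
  move=> z Hz; rewrite permM sgenE //; have := Hub z Hz.
  by do ! case: eqP => //; lia.
- apply: pm_char.
    case: (eqVneq (pm w y) i) => HPi.
    + exists p; split.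
        have : z0 = q by apply: (@perm_val_inj n w); lia.
        by move=> E; subst; lia.
      by rewrite permM sgenE // Hp eqxx.
    + exists z0; split => //; rewrite permM sgenE // Ez0.
      move/eqP: HPi => HPi; do ! case: eqP => //; lia.
  move=> z Hz; rewrite permM sgenE //; have := Hub z Hz.
  by do ! case: eqP => //; lia.
Qed.

Lemma Psi_valid n l : all (valid_letter n) l -> all (valid_letter n) (Psi_word n l).
Proof.
elim: l => //= i l IH /andP[Hi Hl]; rewrite IH // andbT.
by move: Hi; rewrite /valid_letter => /andP[H1 H2]; apply/andP; split; lia.
Qed.

Lemma Inv_formula n l (w : 'S_n.+1) : reduced_word l w ->
  forall y, y <= n -> Inv (Psi_word n l) y = n - pm w (n - y).
Proof.
elim: l w => [|i l IH] w.
  case=> _ Hw _ y Hy; rewrite -Hw /= pm_id; lia.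
move=> H; have Hv : valid_letter n i by case: H => /= /andP[].
move: H; case/reduced_cons => Hr -> [p [q [Hp Hq Hpq]]] y Hy.
rewrite /= (IH _ Hr y Hy) (pm_step Hv Hp Hq Hpq).
have := pm_le (wordperm n l) (n - y).
move: Hv; rewrite /valid_letter /hact => /andP[H1 H2].
do ! case: eqP => //; lia.
Qed.

Lemma incr_ge n (w : 'S_n.+1) : (forall x y : 'I_n.+1, x < y -> w x < w y) ->
  forall x : 'I_n.+1, x <= w x.
Proof.
move=> H; suff: forall k (x : 'I_n.+1), (x : nat) = k -> k <= w x by move=> S x; apply: S.
elim => [|k IH] x Hx //.
have Hk : k < n.+1 by case: x Hx => /= x' ? ?; lia.
have := IH (Ordinal Hk) erefl; have := H (Ordinal Hk) x; rewrite /= Hx => H'.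
have := H' (ltnSn k); lia.
Qed.

Lemma len0_id n (w : 'S_n.+1) : len w = 0 -> w = 1.
Proof.
rewrite lenE => /eqP; rewrite cards_eq0 => /eqP E.
have Hinc : forall x y : 'I_n.+1, x < y -> w x < w y.
  move=> x y Hxy; case: (ord_tri (w x) (w y)) => // H.
  - have : (x, y) \in invset w by rewrite inE /= Hxy H.
    by rewrite E inE.
  - by move: Hxy; rewrite (perm_inj H) ltnn.
have Hinc' : forall x y : 'I_n.+1, x < y -> w^-1 x < w^-1 y.
  move=> x y Hxy; case: (ord_tri (w^-1 x) (w^-1 y)) => // H.
  - by have := Hinc _ _ H; rewrite !permKV; lia.
  - by move: Hxy; rewrite (perm_inj H) ltnn.
apply/permP => x; rewrite perm1; apply: val_inj; apply/eqP; rewrite eqn_leq.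
have := incr_ge Hinc' (w x); rewrite permK => ->.
by rewrite incr_ge.
Qed.

Lemma val_descent n (w : 'S_n.+1) : forall d (x1 x2 : 'I_n.+1), x1 < x2 -> (w x2 : nat) + d.+1 = w x1 ->
  exists i (p q : 'I_n.+1), [/\ valid_letter n i, (w p : nat) = i.-1, (w q : nat) = i & q < p].
Proof.
elim => [|d IH] x1 x2 H12 Hv.
  exists (w x1), x2, x1; split => //; last by lia.
  by rewrite /valid_letter; apply/andP; split; [lia| rewrite -ltnS].
have [z Hz] := @pos_ex n w (w x2).+1 (ltac:(have := ltn_ord (w x1); lia)).
case: (ord_tri z x2) => H.
- exists (w x2).+1, x2, z; split => //.
  by rewrite /valid_letter; apply/andP; split; [lia| have := ltn_ord (w x1); lia].
- apply: (IH x1 z); lia.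
- by move: Hz; rewrite H; lia.
Qed.

Lemma reduced_ex n (w : 'S_n.+1) : exists l, reduced_word l w.
Proof.
have [k Hk] : exists k, len w = k by eexists.
elim: k w Hk => [|k IH] w Hk.
  by exists [::]; split => //=; rewrite ?(len0_id Hk) ?Hk.
have : 0 < #|invset w| by rewrite -lenE Hk.
rewrite card_gt0 => /set0Pn [[x1 x2]]; rewrite inE /= => /andP[H12 Hv].
have [i [p [q [Hi Hp Hq Hqp]]]] := @val_descent n w (w x1 - (w x2).+1) x1 x2 H12 (ltac:(lia)).
have Hd := len_sgen_down Hi Hp Hq Hqp.
have [l Hl] := IH (w * sgen n i) (ltac:(lia)).
exists (i :: l); case: Hl => Hv1 Hw Hs; split.
- by rewrite /= Hi.
- by rewrite wordperm_cons Hw -mulgA sgen2 mulg1.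
- by rewrite /= Hs; lia.
Qed.

Definition eqpm n (u v : 'S_n.+1) := forall y, y <= n -> pm u y = pm v y.

Lemma inG_pm n m (v0 w : 'S_n.+1) : all (valid_letter n) m -> inG m v0 ->
  (inG m w <-> eqpm w v0).
Proof.
move=> Hm [l0 [Hl0 Hc0]]; split.
- case=> l [Hl Hc] y Hy.
  have E := Mcong_sound (Mc_trans Hc (Mc_sym Hc0)) (n - y).
  rewrite (Inv_formula Hl) ?(Inv_formula Hl0) in E; try lia.
  have := pm_le w y; have := pm_le v0 y.
  have E2 : n - (n - y) = y by lia.
  by rewrite E2 in E; lia.
- move=> Heq; have [l Hl] := reduced_ex w.
  exists l; split => //.
  have Hlv : all (valid_letter n) l by case: Hl.
  have Hl0v : all (valid_letter n) l0 by case: Hl0.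
  apply: Mc_trans (Mc_of_Inv (Psi_valid Hlv) (Psi_valid Hl0v) _) Hc0.
  move=> y Hy; rewrite (Inv_formula Hl) ?(Inv_formula Hl0) ?Heq //; lia.
Qed.

Local Close Scope group_scope.

Lemma mk_pat321 n (w : 'S_n.+1) (r z p : 'I_n.+1) : r < z -> z < p -> w z < w r -> w p < w z ->
  contains_pattern w [:: 3; 2; 1].
Proof.
move=> H1 H2 H3 H4; exists [:: r; z; p]; split => //=; first by rewrite H1 H2.
move=> a b Ha Hb.
case: a Ha => [|[|[|a]]] // _; case: b Hb => [|[|[|b]]] // _ /=; apply/idP/idP; lia.
Qed.

Lemma mk_pat312 n (w : 'S_n.+1) (r z p : 'I_n.+1) : r < z -> z < p -> w p < w r -> w z < w p ->
  contains_pattern w [:: 3; 1; 2].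
Proof.
move=> H1 H2 H3 H4; exists [:: r; z; p]; split => //=; first by rewrite H1 H2.
move=> a b Ha Hb.
case: a Ha => [|[|[|a]]] // _; case: b Hb => [|[|[|b]]] // _ /=; apply/idP/idP; lia.
Qed.

Lemma get_pat n (w : 'S_n.+1) s : size s = 3 -> contains_pattern w s ->
  exists a b c : 'I_n.+1, [/\ a < b, b < c &
    forall i j, i < 3 -> j < 3 ->
      (w (nth ord0 [:: a; b; c] i) < w (nth ord0 [:: a; b; c] j)) = (nth 0 s i < nth 0 s j)].
Proof.
move=> Hs [idx [Hi Hsort Hv]].
move: Hi Hsort Hv; rewrite Hs.
case: idx => [|a [|b [|c [|]]]] //= _ /and3P[Hab Hbc _] Hv.
by exists a, b, c; split.
Qed.

Lemma get_pat321 n (w : 'S_n.+1) : contains_pattern w [:: 3; 2; 1] ->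
  exists a b c : 'I_n.+1, [/\ a < b, b < c, w b < w a & w c < w b].
Proof.
move=> H; have [a [b [c [H1 H2 Hv]]]] := get_pat (s := [:: 3; 2; 1]) (erefl _) H.
exists a, b, c; split => //; [exact: (Hv 1 0) | exact: (Hv 2 1)].
Qed.

Lemma get_pat312 n (w : 'S_n.+1) : contains_pattern w [:: 3; 1; 2] ->
  exists a b c : 'I_n.+1, [/\ a < b, b < c, w b < w c & w c < w a].
Proof.
move=> H; have [a [b [c [H1 H2 Hv]]]] := get_pat (s := [:: 3; 1; 2]) (erefl _) H.
exists a, b, c; split => //; [exact: (Hv 1 2) | exact: (Hv 2 0)].
Qed.

Lemma C1_core n (u v : 'S_n.+1) (x : 'I_n.+1) : eqpm u v -> avoids u [:: 3; 2; 1] ->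
  (forall y : 'I_n.+1, y < x -> u y = v y) -> ~ (v x < u x).
Proof.
move=> He Hav Hlt Hvu.
have [p Hp] := @pos_ex n u (v x) (ltac:(have := ltn_ord (v x); lia)).
have Hxp : x < p.
  case: (ord_tri x p) => // H.
  - have E := Hlt _ H.
    have E' : p = x by apply: (perm_val_inj (w := v)); rewrite -E.
    by subst; rewrite ltnn in H.
  - by subst; lia.
have Hub := @pm_ub n u x x (leqnn _).
case: (eqVneq (u x : nat) (pm u x)) => Hrec.
- have [z [Hz Ez]] := pm_wit v x.
  rewrite -He ?(leq_trans (leq_ord x)) // -Hrec in Ez.
  case: (ord_tri z x) => H.
  + have E := Hlt _ H.
    have E' : z = x by apply: (perm_val_inj (w := u)); rewrite E.
    by subst; rewrite ltnn in H.
  + lia.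
  + by move: Ez; rewrite H; lia.
- have [r [Hr Er]] := pm_wit u x.
  have Hrx : r < x.
    case: (ord_tri r x) => // H; last by move: Er; rewrite H => E; rewrite E eqxx in Hrec.
    lia.
  apply: Hav; apply: (mk_pat321 (r := r) (z := x) (p := p)) => //; lia.
Qed.

Lemma C2_core n (u v : 'S_n.+1) (x : 'I_n.+1) : eqpm u v -> avoids v [:: 3; 1; 2] ->
  (forall y : 'I_n.+1, y < x -> u y = v y) -> ~ (v x < u x).
Proof.
move=> He Hav Hlt Hvu.
have [p Hp] := @pos_ex n v (u x) (ltac:(have := ltn_ord (u x); lia)).
have Hxp : x < p.
  case: (ord_tri x p) => // H.
  - have E := Hlt _ H.
    have E' : p = x by apply: (perm_val_inj (w := u)); rewrite E.
    by subst; rewrite ltnn in H.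
  - by subst; lia.
have Hub := @pm_ub n u x x (leqnn _).
have [r [Hr Er]] := pm_wit v x.
rewrite -He ?(leq_trans (leq_ord x)) // in Er.
have Hrx : r < x.
  case: (ord_tri r x) => // H; last by subst; lia.
  lia.
have Hne : (v r : nat) != u x.
  apply/eqP => E; have E' : r = x by apply: (perm_val_inj (w := u)); rewrite -E Hlt.
  by subst; rewrite ltnn in Hrx.
apply: Hav; apply: (mk_pat312 (r := r) (z := x) (p := p)) => //; move/eqP: Hne; lia.
Qed.

Lemma uniq_by_core n (u v : 'S_n.+1) :
  (forall x : 'I_n.+1, (forall y : 'I_n.+1, y < x -> u y = v y) -> ~ (v x < u x)) ->
  (forall x : 'I_n.+1, (forall y : 'I_n.+1, y < x -> v y = u y) -> ~ (u x < v x)) ->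
  u = v.
Proof.
move=> H1 H2.
suff S : forall k (x : 'I_n.+1), x < k -> u x = v x by apply/permP => x; apply: (S n.+1).
elim => [|k IH] x Hx //.
case: (ltngtP x k) => H; first exact: IH.
- lia.
- have Hlt : forall y : 'I_n.+1, y < x -> u y = v y by move=> y Hy; apply: IH; lia.
  case: (ord_tri (u x) (v x)) => E.
  + by exfalso; apply: (H2 x) => // y Hy; rewrite Hlt.
  + by exfalso; apply: (H1 x).
  + exact: E.
Qed.

Lemma eqpm_sym n (u v : 'S_n.+1) : eqpm u v -> eqpm v u.
Proof. by move=> H y Hy; rewrite H. Qed.

Lemma C1 n (u v : 'S_n.+1) : eqpm u v -> avoids u [:: 3; 2; 1] -> avoids v [:: 3; 2; 1] -> u = v.
Proof.
move=> He Hu Hv; apply: uniq_by_core => x; [exact: C1_core|exact: C1_core (eqpm_sym He) Hv].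
Qed.

Lemma C2 n (u v : 'S_n.+1) : eqpm u v -> avoids u [:: 3; 1; 2] -> avoids v [:: 3; 1; 2] -> u = v.
Proof.
move=> He Hu Hv; apply: uniq_by_core => x; [exact: C2_core|exact: C2_core (eqpm_sym He) Hu].
Qed.

Lemma swap_pm n (w : 'S_n.+1) (a b c : 'I_n.+1) : a < b -> b < c -> w b < w a -> w c < w a ->
  eqpm (tperm b c * w)%g w.
Proof.
move=> Hab Hbc Hba Hca y Hy.
have [z0 [Hz0 Ez0]] := pm_wit w y.
have Hub := @pm_ub n w y.
apply: pm_char.
- exists z0; split => //; rewrite permM tpermD //.
  + apply/eqP => E; subst z0; have := Hub a (ltac:(lia)); lia.
  + apply/eqP => E; subst z0; have := Hub a (ltac:(lia)); lia.
- move=> z Hz; rewrite permM; case: tpermP => [E|E|_ _]; subst.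
  + case: (leqP c y) => Hcy; first exact: Hub.
    have := Hub a (ltac:(lia)); lia.
  + apply: Hub; lia.
  + exact: Hub.
Qed.

Definition mu n (w : 'S_n.+1) := \sum_(x : 'I_n.+1) x * w x.

Lemma sum2 n (F : 'I_n.+1 -> nat) (b c : 'I_n.+1) : c != b ->
  \sum_x F x = F b + (F c + \sum_(x | (x != b) && (x != c)) F x).
Proof.
move=> Hne; rewrite (bigD1 b) //= (bigD1 c) /=; last by rewrite Hne.
congr (_ + (_ + _)); apply: eq_bigl => x; case: (x != b) => //.
Qed.

Lemma mu_swap n (w : 'S_n.+1) (b c : 'I_n.+1) : b < c -> w c < w b -> mu w < mu (tperm b c * w)%g.
Proof.
move=> Hbc Hcb; rewrite /mu.
have Hne : c != b by apply/eqP => E; subst; rewrite ltnn in Hbc.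
rewrite (sum2 _ Hne) [X in _ < X](sum2 _ Hne).
rewrite !permM tpermL tpermR.
have -> : \sum_(x | (x != b) && (x != c)) x * (tperm b c * w)%g x =
          \sum_(x | (x != b) && (x != c)) x * w x.
  apply: eq_bigr => x /andP[H1 H2]; rewrite permM tpermD // eq_sym //.
nia.
Qed.

Lemma card_pairs (T : finType) (P : T -> T -> bool) :
  #|[set pr : T * T | P pr.1 pr.2]| = \sum_(y : T) #|[set z | P y z]|.
Proof.
rewrite -sum1_card.
rewrite (eq_bigr (fun y => \sum_(z in [set z | P y z]) 1)); last by move=> y _; rewrite sum1_card.
rewrite pair_big_dep /=.
apply: eq_bigl => [[x y]]; by rewrite !inE.
Qed.

Lemma lt_card n (w : 'S_n.+1) P : #|[set z : 'I_n.+1 | w z < P]| = #|[set x : 'I_n.+1 | x < P]|.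
Proof.
transitivity #|(w @^-1: [set x : 'I_n.+1 | x < P])|; last exact: card_preimset (@perm_inj _ w).
by apply: eq_card => z; rewrite !inE.
Qed.

Lemma split_row n (w : 'S_n.+1) (y : 'I_n.+1) P :
  #|[set z : 'I_n.+1 | w z < P]| =
  #|[set z : 'I_n.+1 | (z <= y) && (w z < P)]| + #|[set z : 'I_n.+1 | (y < z) && (w z < P)]|.
Proof.
rewrite -(cardsID [set z : 'I_n.+1 | z <= y]); congr (_ + _); apply: eq_card => z; rewrite !inE.
  by rewrite andbC.
by rewrite -ltnNge andbC.
Qed.

Lemma low_row n (w : 'S_n.+1) (y : 'I_n.+1) :
  #|[set z : 'I_n.+1 | (z <= y) && (w z < pm w y)]|.+1 = #|[set z : 'I_n.+1 | z <= y]|.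
Proof.
have [r [Hr Er]] := pm_wit w y.
have -> : [set z : 'I_n.+1 | z <= y] = r |: [set z : 'I_n.+1 | (z <= y) && (w z < pm w y)].
  apply/setP => z; rewrite !inE.
  case: (eqVneq z r) => [->|Hzr] /=; first by rewrite Hr.
  case: (leqP z y) => Hzy //=.
  have := pm_ub w Hzy; rewrite leq_eqVlt => /orP[/eqP E|] //.
  by move: Hzr; rewrite (perm_val_inj (w := w) (x := z) (y := r)) ?eqxx // Er.
by rewrite cardsU1 inE Er ltnn andbF.
Qed.

Definition rowc n (w : 'S_n.+1) (y : 'I_n.+1) :=
  #|[set z : 'I_n.+1 | (y < z) && (w z < pm w y)]|.

Lemma rowc_eq n (u v : 'S_n.+1) (y : 'I_n.+1) : eqpm u v -> rowc u y = rowc v y.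
Proof.
move=> He; have E : pm u y = pm v y by apply: He; rewrite -ltnS.
have Hu := split_row u y (pm u y); have Hv := split_row v y (pm v y).
have Lu := low_row u y; have Lv := low_row v y.
rewrite lt_card in Hu; rewrite lt_card in Hv; rewrite /rowc.
rewrite E in Hu Lu *; lia.
Qed.

Lemma rec_char n (w : 'S_n.+1) (y : 'I_n.+1) :
  ((w y : nat) == pm w y) = [forall z : 'I_n.+1, (z < y) ==> (pm w z < pm w y)].
Proof.
apply/eqP/forallP => [E z|H].
- apply/implyP => Hzy.
  have [x [Hx Ex]] := pm_wit w z.
  rewrite -Ex -E; have := pm_ub w (ltnW (leq_ltn_trans Hx Hzy)); rewrite -E.
  rewrite leq_eqVlt => /orP[/eqP Ex'|//].
  have : x = y by apply: (perm_val_inj (w := w)).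
  by move=> ?; subst; lia.
- have [x [Hx Ex]] := pm_wit w y.
  case: (ord_tri x y) => Hxy.
  + have := implyP (H x) Hxy; have := pm_ub w (leqnn x); lia.
  + lia.
  + by rewrite -Ex Hxy.
Qed.

Lemma rec_eq n (u v : 'S_n.+1) (y : 'I_n.+1) : eqpm u v ->
  ((u y : nat) == pm u y) = ((v y : nat) == pm v y).
Proof.
move=> He; rewrite !rec_char; apply: eq_forallb => z.
by rewrite !He // -ltnS.
Qed.

Definition Sset n (w : 'S_n.+1) :=
  [set pr : 'I_n.+1 * 'I_n.+1 | (fun y z : 'I_n.+1 => (y < z) && (w z < pm w y)) pr.1 pr.2].

Definition Tset n (w : 'S_n.+1) :=
  [set pr : 'I_n.+1 * 'I_n.+1 |
     (fun y z : 'I_n.+1 => ((w y : nat) == pm w y) && ((y < z) && (w z < pm w y))) pr.1 pr.2].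

Lemma Sset_card n (w : 'S_n.+1) : #|Sset w| = \sum_y rowc w y.
Proof. exact: (card_pairs (fun y z : 'I_n.+1 => (y < z) && (w z < pm w y))). Qed.

Lemma Tset_card n (w : 'S_n.+1) :
  #|Tset w| = \sum_y (if (w y : nat) == pm w y then rowc w y else 0).
Proof.
rewrite /Tset (card_pairs (fun y z : 'I_n.+1 => ((w y : nat) == pm w y) && ((y < z) && (w z < pm w y)))).
apply: eq_bigr => y _.
case: ifP => H; rewrite /rowc.
  by apply: eq_card => z; rewrite !inE /= ?H.
by apply/eqP; rewrite cards_eq0; apply/eqP/setP => z; rewrite !inE /= ?H.
Qed.

Lemma UB n (u v : 'S_n.+1) : eqpm u v -> avoids u [:: 3; 1; 2] -> len v <= len u.
Proof.
move=> He Hav.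
have H1 : len v <= #|Sset v|.
  rewrite lenE; apply: subset_leq_card; apply/subsetP => [[y z]]; rewrite !inE /= => /andP[K1 K2].
  by rewrite K1 /=; apply: leq_trans K2 _; apply: pm_ub.
have H2 : #|Sset u| <= len u.
  rewrite lenE; apply: subset_leq_card; apply/subsetP => [[y z]]; rewrite !inE /= => /andP[K1 K2].
  rewrite K1 /=; case: (ord_tri (u y) (u z)) => // H3.
  - have [r [Hr Er]] := pm_wit u y.
    have Hry : r < y.
      case: (ord_tri r y) => // H; last by move: Er; rewrite H; lia.
      lia.
    by exfalso; apply: Hav; apply: (mk_pat312 (r := r) (z := y) (p := z)); lia.
  - by move: K1; rewrite (perm_inj H3) ltnn.
have E : #|Sset u| = #|Sset v|.
  rewrite !Sset_card; apply: eq_bigr => y _; exact: rowc_eq.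
lia.
Qed.

Lemma LB n (u v : 'S_n.+1) : eqpm u v -> avoids u [:: 3; 2; 1] -> len u <= len v.
Proof.
move=> He Hav.
have H1 : #|Tset v| <= len v.
  rewrite lenE; apply: subset_leq_card; apply/subsetP => [[y z]]; rewrite !inE /=.
  by case/and3P => /eqP -> -> ->.
have H2 : len u <= #|Tset u|.
  rewrite lenE; apply: subset_leq_card; apply/subsetP => [[y z]]; rewrite !inE /= => /andP[K1 K2].
  have Hrec : (u y : nat) = pm u y.
    have [r [Hr Er]] := pm_wit u y.
    case: (ord_tri r y) => H; last by rewrite -Er H.
    - exfalso; apply: Hav; apply: (mk_pat321 (r := r) (z := y) (p := z)) => //; try lia.
      have := pm_ub u (leqnn y); rewrite -Er leq_eqVlt => /orP[/eqP E|//].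
      by move: H; rewrite (perm_val_inj E) ltnn.
    - lia.
  by rewrite Hrec eqxx K1 -Hrec.
have E : #|Tset u| = #|Tset v|.
  rewrite !Tset_card; apply: eq_bigr => y _; rewrite (rec_eq y He); case: ifP => // _.
  exact: rowc_eq.
lia.
Qed.

Definition eqpmb n (u v : 'S_n.+1) := [forall y : 'I_n.+1, pm u y == pm v y].

Lemma eqpmbP n (u v : 'S_n.+1) : eqpmb u v -> eqpm u v.
Proof.
move=> /forallP H y Hy; have := H (inord y); rewrite inordK ?ltnS //; by move/eqP.
Qed.

Lemma eqpmPb n (u v : 'S_n.+1) : eqpm u v -> eqpmb u v.
Proof. by move=> H; apply/forallP => y; rewrite H // -ltnS. Qed.

Lemma eqpm_trans n (u v w : 'S_n.+1) : eqpm u v -> eqpm v w -> eqpm u w.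
Proof. by move=> H1 H2 y Hy; rewrite H1 ?H2. Qed.

Lemma ex321 n (v0 : 'S_n.+1) : exists u : 'S_n.+1, eqpm u v0 /\ avoids u [:: 3; 2; 1].
Proof.
case: (@arg_maxnP _ v0 (fun w => eqpmb w v0) (@mu n)) => [|u Hu Hmax].
  by apply: eqpmPb.
exists u; split; first exact: eqpmbP.
move=> /get_pat321 [a [b [c [Hab Hbc Hba Hcb]]]].
have Hs := swap_pm Hab Hbc Hba (ltn_trans Hcb Hba).
have := Hmax (tperm b c * u)%g (eqpmPb (eqpm_trans Hs (eqpmbP Hu))).
have := mu_swap Hbc Hcb; lia.
Qed.

Lemma ex312 n (v0 : 'S_n.+1) : exists u : 'S_n.+1, eqpm u v0 /\ avoids u [:: 3; 1; 2].
Proof.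
case: (@arg_minnP _ v0 (fun w => eqpmb w v0) (@mu n)) => [|u Hu Hmin].
  by apply: eqpmPb.
exists u; split; first exact: eqpmbP.
move=> /get_pat312 [a [b [c [Hab Hbc Hbc' Hca]]]].
have Hs := swap_pm Hab Hbc (ltn_trans Hbc' Hca) Hca.
set w := (tperm b c * u)%g.
have Hw : (tperm b c * w)%g = u by rewrite /w mulgA tperm2 mul1g.
have := Hmin w (eqpmPb (eqpm_trans Hs (eqpmbP Hu))).
have := @mu_swap n w b c Hbc.
rewrite Hw /w !permM tpermL tpermR => H; have := H Hbc'; lia.
Qed.

Theorem mainTheorem2 (n : nat) (m : seq nat) :
  all (valid_letter n) m ->
  (exists w : 'S_n.+1, inG m w) ->
  (exists! u : 'S_n.+1, inG m u /\ avoids u [:: 3; 2; 1]) /\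
  (forall u : 'S_n.+1, inG m u -> avoids u [:: 3; 2; 1] ->
     forall v : 'S_n.+1, inG m v -> len u <= len v) /\
  (exists! u : 'S_n.+1, inG m u /\ avoids u [:: 3; 1; 2]) /\
  (forall u : 'S_n.+1, inG m u -> avoids u [:: 3; 1; 2] ->
     forall v : 'S_n.+1, inG m v -> len v <= len u).
Proof.
move=> Hm [v0 Hv0].
have G := fun w => @inG_pm n m v0 w Hm Hv0.
split; [|split; [|split]].
- have [u [Hu Ha]] := ex321 v0.
  exists u; split; first by split => //; apply/G.
  move=> u' [Hu' Ha']; apply: C1 Ha Ha'.
  exact: eqpm_trans Hu (eqpm_sym (proj1 (G u') Hu')).
- move=> u Hu Ha v Hv; apply: LB Ha.
  exact: eqpm_trans (proj1 (G u) Hu) (eqpm_sym (proj1 (G v) Hv)).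
- have [u [Hu Ha]] := ex312 v0.
  exists u; split; first by split => //; apply/G.
  move=> u' [Hu' Ha']; apply: C2 Ha Ha'.
  exact: eqpm_trans Hu (eqpm_sym (proj1 (G u') Hu')).
- move=> u Hu Ha v Hv; apply: UB Ha.
  exact: eqpm_trans (proj1 (G u) Hu) (eqpm_sym (proj1 (G v) Hv)).
Qed.
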